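(* Let $\sim$ and $\sim'$ be right congruences on $\Sigma^*$. (a) If $\sim'$ is coarser than $\sim$ (i.e. $\sim\subseteq\sim'$) and $\sim$ has no critical tuple, then $\sim'$ has no critical tuple. (b) If $\sim$ and $\sim'$ both have no critical tuple, then $\sim\cap\sim'$ is a right congruence which has no critical tuple.
   Context: A right congruence on $\Sigma^*$ is an equivalence $\sim$ with $x\sim y\Rightarrow xz\sim yz$. A critical tuple in a right congruence $\sim$ is $(u_2,v_2,u,v)$ with $|u_2|=|v_2|\ge1$, $u=u_1u_2$, $v=v_1v_2$ for some words $u_1,v_1$, and $u_2w\not\sim v_2w$ for all $w\in\{u,v\}^*$. *)

(* Defs.v *)
From mathcomp Require Import all_boot.
Set Implicit Arguments. Unset Strict Implicit. Unset Printing Implicit Defensive.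

Definition right_congruence (Sigma : finType) (R : seq Sigma -> seq Sigma -> Prop) : Prop :=
  (forall x, R x x) /\ (forall x y, R x y -> R y x) /\
  (forall x y z, R x y -> R y z -> R x z) /\
  (forall x y z, R x y -> R (x ++ z) (y ++ z)).

Inductive in_star2 (Sigma : finType) (u v : seq Sigma) : seq Sigma -> Prop :=
| star_nil : in_star2 u v [::]
| star_u w : in_star2 u v w -> in_star2 u v (u ++ w)
| star_v w : in_star2 u v w -> in_star2 u v (v ++ w).

Definition critical_tuple (Sigma : finType) (R : seq Sigma -> seq Sigma -> Prop)
    (u2 v2 u v : seq Sigma) : Prop :=
  size u2 = size v2 /\ 1 <= size u2 /\
  (exists u1 v1, u = u1 ++ u2 /\ v = v1 ++ v2) /\
  (forall w, in_star2 u v w -> ~ R (u2 ++ w) (v2 ++ w)).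

Definition no_critical_tuple (Sigma : finType) (R : seq Sigma -> seq Sigma -> Prop) : Prop :=
  forall u2 v2 u v, ~ critical_tuple R u2 v2 u v.

(* Main.v *)
Require Import Defs.
From mathcomp Require Import all_boot.

Lemma star_cat (Sigma : finType) (u v a b : seq Sigma) :
  in_star2 u v a -> in_star2 u v b -> in_star2 u v (a ++ b).
Proof.
elim=> [|w _ IH|w _ IH] Hb //=; rewrite -catA; [apply: star_u|apply: star_v]; exact: IH.
Qed.

Lemma star_sub (Sigma : finType) (u v w a : seq Sigma) :
  in_star2 u v w -> in_star2 (u ++ w) (v ++ w) a -> in_star2 u v a.
Proof.
move=> Hw; elim=> [|x _ IH|x _ IH]; first exact: star_nil.
- rewrite -catA; apply: star_u; exact: star_cat.
- rewrite -catA; apply: star_v; exact: star_cat.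
Qed.

Theorem lemma17 (Sigma : finType) :
  (forall R R' : seq Sigma -> seq Sigma -> Prop,
      right_congruence R -> right_congruence R' ->
      (forall x y, R x y -> R' x y) ->
      no_critical_tuple R -> no_critical_tuple R') /\
  (forall R R' : seq Sigma -> seq Sigma -> Prop,
      right_congruence R -> right_congruence R' ->
      no_critical_tuple R -> no_critical_tuple R' ->
      right_congruence (fun x y => R x y /\ R' x y) /\
      no_critical_tuple (fun x y => R x y /\ R' x y)).
Proof.
split.
  move=> R R' _ _ sub nc u2 v2 u v [H1 [H2 [H3 H4]]].
  apply: (nc u2 v2 u v); split=> //; split=> //; split=> // w Hw HR.
  exact: (H4 w Hw (sub _ _ HR)).
move=> R R' [r1 [s1 [t1 c1]]] [r2 [s2 [t2 c2]]] nc nc'; split.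
  split; first by move=> x; split.
  split; first by move=> x y [? ?]; split; auto.
  split; first by move=> x y z [? ?] [? ?]; split; eauto.
  by move=> x y z [? ?]; split; auto.
move=> u2 v2 u v [H1 [H2 [[u1 [v1 [Hu Hv]]] H4]]].
apply: (nc u2 v2 u v); split=> //; split=> //; split; first by exists u1, v1.
move=> w Hw HR.
apply: (nc' (u2 ++ w) (v2 ++ w) (u ++ w) (v ++ w)); split.
  by rewrite !size_cat H1.
split; first by rewrite size_cat (leq_trans H2) // leq_addr.
split; first by exists u1, v1; rewrite Hu Hv !catA.
move=> w' Hw' HR'.
apply: (H4 (w ++ w')); first (apply: star_cat; [exact: Hw| exact: (@star_sub _ _ _ _ _ Hw Hw')]).
split; last by rewrite !catA.
by rewrite !catA; apply: c1.
Qed.
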